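(* Consider a two-user ($N=2$) multi-hop decode-and-forward relay network with $L\ge 2$ hops and a fixed relay assignment, with powers, SINRs and sum-rate as defined in the context. Then there exists a power allocation $\mathbf{P}^*=(P_{i,l}^* )_{i\in\{1,2\},\,l\in\{0,\dots,L-1\}}\in[0,P]^{2L}$ that maximizes the sum-rate $R(\mathbf{P})=\sum_{i=1}^{2}\log_2\!\big(1+\min_{l\in\{1,\dots,L\}}\gamma_{i,l}(\mathbf{P})\big)$ over $[0,P]^{2L}$ and satisfies, for each user $i\in\{1,2\}$, $\gamma_{i,1}(\mathbf{P}^* )=\gamma_{i,2}(\mathbf{P}^* )=\cdots=\gamma_{i,L}(\mathbf{P}^* )$; i.e., the SINRs of each user are equal in all hops.
   Context: Setup: there are two source–destination (S-D) pairs (users) $i\in\{1,2\}$, whose information travels over $L$ hops. For a fixed relay assignment, user $i$ uses a path of nodes $r_{i,0},r_{i,1},\dots,r_{i,L}$ (source $r_{i,0}$, destination $r_{i,L}$, distinct relays of the two users in each intermediate hop). In hop $l\in\{1,\dots,L\}$ the two transmitting nodes $r_{1,l-1},r_{2,l-1}$ transmit simultaneously with powers $P_{1,l-1},P_{2,l-1}\in[0,P]$, where $P>0$ is the maximum transmit power. Let $g_{j,i,l}=|h[r_{j,l-1},r_{i,l},l]|^2>0$ denote the channel power gain from the transmitter of user $j$ to the receiver of user $i$ in hop $l$, and let $\sigma^2>0$ be the noise variance. The SINR of user $i$ in hop $l$ (interference treated as noise, $j\neq i$ the other user) is $\gamma_{i,l}(\mathbf{P})=\dfrac{P_{i,l-1}\,g_{i,i,l}}{\sigma^2+P_{j,l-1}\,g_{j,i,l}}$.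 The end-to-end SINR of user $i$ is $\min_{l\in\{1,\dots,L\}}\gamma_{i,l}$ and the sum-rate is $R(\mathbf{P})=\sum_{i=1}^{2}\log_2(1+\min_{l}\gamma_{i,l}(\mathbf{P}))$. *)

(* Defs.v *)
From Stdlib Require Import Reals List Lia Lra.
Import ListNotations.
Open Scope R_scope.

(* Users are indexed by the naturals 1 and 2; the other user of i is 3 - i. *)
Definition other (i : nat) : nat := (3 - i)%nat.

(* Power allocation: Pw i k = P_{i,k} (transmit power of user i's node r_{i,k}),
   k in {0,...,L-1}.  Channel gains: g j i l = g_{j,i,l} (from transmitter of
   user j to receiver of user i in hop l), l in {1,...,L}.  The fixed relay
   assignment is encoded in the gains g. *)
Definition sinr (sigma2 : R) (g : nat -> nat -> nat -> R) (Pw : nat -> nat -> R)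
  (i l : nat) : R :=
  Pw i (l - 1)%nat * g i i l /
  (sigma2 + Pw (other i) (l - 1)%nat * g (other i) i l).

Definition min_sinr (L : nat) (sigma2 : R) (g : nat -> nat -> nat -> R)
  (Pw : nat -> nat -> R) (i : nat) : R :=
  fold_right Rmin (sinr sigma2 g Pw i 1%nat)
    (map (fun l => sinr sigma2 g Pw i l) (seq 1 L)).

Definition log2 (x : R) : R := ln x / ln 2.

Definition sum_rate (L : nat) (sigma2 : R) (g : nat -> nat -> nat -> R)
  (Pw : nat -> nat -> R) : R :=
  log2 (1 + min_sinr L sigma2 g Pw 1%nat) + log2 (1 + min_sinr L sigma2 g Pw 2%nat).

Definition feasible (L : nat) (Pmax : R) (Pw : nat -> nat -> R) : Prop :=
  forall i k : nat, (i = 1%nat \/ i = 2%nat) -> (k < L)%nat -> 0 <= Pw i k <= Pmax.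

(* Main.v *)
Require Import Defs.
From Stdlib Require Import Reals List Lia Lra Psatz.
Import ListNotations.
Open Scope R_scope.

Lemma hop_solve (s g11 g22 c d m1 m2 X Y : R) :
  0 < s -> 0 < g11 -> 0 < g22 -> 0 < c -> 0 < d -> 0 <= m1 -> 0 <= m2 ->
  0 <= X -> 0 <= Y ->
  m1 * (s + Y * c) <= X * g11 -> m2 * (s + X * d) <= Y * g22 ->
  let E := g11 * g22 - m1 * m2 * c * d in
  let x := s * m1 * (g22 + m2 * c) / E in
  let y := s * m2 * (g11 + m1 * d) / E in
  0 <= x <= X /\ 0 <= y <= Y /\
  x * g11 / (s + y * c) = m1 /\ y * g22 / (s + x * d) = m2.
Proof.
intros Hs H11 H22 Hc Hd Hm1 Hm2 HX HY H1 H2 E x y.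
assert (HXE : X * E >= s * m1 * (g22 + m2 * c)).
{ unfold E. assert (m1 * c * (m2 * (s + X * d)) <= m1 * c * (Y * g22)).
  { apply Rmult_le_compat_l; [nra|lra]. }
  assert (g22 * (m1 * (s + Y * c)) <= g22 * (X * g11)) by (apply Rmult_le_compat_l; lra).
  nra. }
assert (HYE : Y * E >= s * m2 * (g11 + m1 * d)).
{ unfold E. assert (m2 * d * (m1 * (s + Y * c)) <= m2 * d * (X * g11)).
  { apply Rmult_le_compat_l; [nra|lra]. }
  assert (g11 * (m2 * (s + X * d)) <= g11 * (Y * g22)) by (apply Rmult_le_compat_l; lra).
  nra. }
assert (HE : 0 < E).
{ destruct (Req_dec m1 0) as [->|Hn].
  - unfold E. nra.
  - assert (0 < s * m1 * (g22 + m2 * c)).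
    { apply Rmult_lt_0_compat; [apply Rmult_lt_0_compat; lra| nra]. }
    destruct (Rle_lt_dec E 0); [|lra]. nra. }
assert (Hx0 : 0 <= x).
{ unfold x. apply Rmult_le_pos; [|left; apply Rinv_0_lt_compat; lra].
  apply Rmult_le_pos; [nra|nra]. }
assert (Hy0 : 0 <= y).
{ unfold y. apply Rmult_le_pos; [|left; apply Rinv_0_lt_compat; lra].
  apply Rmult_le_pos; [nra|nra]. }
split; [split; [exact Hx0|]|split; [split;[exact Hy0|]|]].
- unfold x. apply (Rmult_le_reg_r E); [lra|]. unfold Rdiv.
  rewrite Rmult_assoc, Rinv_l by lra. lra.
- unfold y. apply (Rmult_le_reg_r E); [lra|]. unfold Rdiv.
  rewrite Rmult_assoc, Rinv_l by lra. lra.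
- assert (e1 : x * g11 = m1 * (s + y * c)).
  { unfold x, y, E. unfold E in HE. field. lra. }
  assert (e2 : y * g22 = m2 * (s + x * d)).
  { unfold x, y, E. unfold E in HE. field. lra. }
  split.
  + rewrite e1. field. nra.
  + rewrite e2. field. nra.
Qed.

Lemma fold_min_le (s : list R) (b x : R) : In x s -> fold_right Rmin b s <= x.
Proof.
induction s as [|a s IH]; simpl; [tauto|].
intros [->|H]; [apply Rmin_l|]. eapply Rle_trans; [apply Rmin_r|auto].
Qed.

Lemma fold_min_le_b (s : list R) (b : R) : fold_right Rmin b s <= b.
Proof.
induction s as [|a s IH]; simpl; [lra|]. eapply Rle_trans; [apply Rmin_r|auto].
Qed.

Lemma fold_min_const (s : list R) (b : R) :
  (forall x, In x s -> x = b) -> fold_right Rmin b s = b.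
Proof.
induction s as [|a s IH]; simpl; intros H; [reflexivity|].
rewrite IH by auto. rewrite (H a) by auto. apply Rmin_left. lra.
Qed.

Lemma fold_min_nonneg (s : list R) (b : R) :
  0 <= b -> (forall x, In x s -> 0 <= x) -> 0 <= fold_right Rmin b s.
Proof.
induction s as [|a s IH]; simpl; intros Hb H; [lra|].
apply Rmin_glb; auto.
Qed.

Lemma other_12 i : (i = 1%nat \/ i = 2%nat) -> (other i = 1%nat \/ other i = 2%nat).
Proof. unfold other; lia. Qed.

Lemma sinr_ext (sigma2 : R) g (P Q : nat -> nat -> R) L i l :
  (forall i k, (i = 1%nat \/ i = 2%nat) -> (k < L)%nat -> P i k = Q i k) ->
  (i = 1%nat \/ i = 2%nat) -> (1 <= l <= L)%nat ->
  sinr sigma2 g P i l = sinr sigma2 g Q i l.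
Proof.
intros H Hi Hl. unfold sinr. rewrite (H i), (H (other i)); auto; try lia. apply other_12; auto.
Qed.

Lemma min_sinr_ext (sigma2 : R) g (P Q : nat -> nat -> R) L i :
  (2 <= L)%nat ->
  (forall i k, (i = 1%nat \/ i = 2%nat) -> (k < L)%nat -> P i k = Q i k) ->
  (i = 1%nat \/ i = 2%nat) ->
  min_sinr L sigma2 g P i = min_sinr L sigma2 g Q i.
Proof.
intros HL H Hi. unfold min_sinr.
rewrite (sinr_ext sigma2 g P Q L i 1) by (auto; lia).
f_equal. apply map_ext_in. intros l Hl. apply in_seq in Hl.
apply (sinr_ext _ _ _ _ L); auto; lia.
Qed.

Lemma sinr_nonneg (sigma2 : R) g (P : nat -> nat -> R) L i l :
  0 < sigma2 ->
  (forall j i l : nat, (j = 1%nat \/ j = 2%nat) -> (i = 1%nat \/ i = 2%nat) ->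
        (1 <= l <= L)%nat -> 0 < g j i l) ->
  (forall i k, (i = 1%nat \/ i = 2%nat) -> (k < L)%nat -> 0 <= P i k) ->
  (i = 1%nat \/ i = 2%nat) -> (1 <= l <= L)%nat ->
  0 <= sinr sigma2 g P i l.
Proof.
intros Hs Hg HP Hi Hl. unfold sinr.
assert (0 <= P i (l-1)%nat) by (apply HP; auto; lia).
assert (0 <= P (other i) (l-1)%nat) by (apply HP; [apply other_12; auto| lia]).
assert (0 < g i i l) by auto.
assert (0 < g (other i) i l) by (apply Hg; auto; apply other_12; auto).
apply Rmult_le_pos; [nra|]. left; apply Rinv_0_lt_compat; nra.
Qed.

Lemma min_sinr_nonneg (sigma2 : R) g (P : nat -> nat -> R) L i :
  (2 <= L)%nat -> 0 < sigma2 ->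
  (forall j i l : nat, (j = 1%nat \/ j = 2%nat) -> (i = 1%nat \/ i = 2%nat) ->
        (1 <= l <= L)%nat -> 0 < g j i l) ->
  (forall i k, (i = 1%nat \/ i = 2%nat) -> (k < L)%nat -> 0 <= P i k) ->
  (i = 1%nat \/ i = 2%nat) ->
  0 <= min_sinr L sigma2 g P i.
Proof.
intros HL Hs Hg HP Hi. unfold min_sinr. apply fold_min_nonneg.
- apply (sinr_nonneg _ _ _ L); auto; lia.
- intros x Hx. apply in_map_iff in Hx. destruct Hx as [l [<- Hl]].
  apply in_seq in Hl. apply (sinr_nonneg _ _ _ L); auto; lia.
Qed.

Lemma sum_rate_mono L sigma2 g P Q :
  0 <= min_sinr L sigma2 g P 1 -> 0 <= min_sinr L sigma2 g P 2 ->
  0 <= min_sinr L sigma2 g Q 1 -> 0 <= min_sinr L sigma2 g Q 2 ->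
  (1 + min_sinr L sigma2 g Q 1) * (1 + min_sinr L sigma2 g Q 2) <=
  (1 + min_sinr L sigma2 g P 1) * (1 + min_sinr L sigma2 g P 2) ->
  sum_rate L sigma2 g Q <= sum_rate L sigma2 g P.
Proof.
intros H1 H2 H3 H4 H. unfold sum_rate, log2.
rewrite <- !Rdiv_plus_distr, <- !ln_mult by lra.
unfold Rdiv. apply Rmult_le_compat_r.
- left. apply Rinv_0_lt_compat. rewrite <- ln_1. apply ln_increasing; lra.
- destruct H as [H|H]; [left; apply ln_increasing; [nra|exact H]|rewrite H; lra].
Qed.

Lemma min_le_sinr L sigma2 g P i l :
  (1 <= l <= L)%nat -> min_sinr L sigma2 g P i <= sinr sigma2 g P i l.
Proof.
intros Hl. unfold min_sinr. apply fold_min_le. apply in_map. apply in_seq. lia.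
Qed.

Lemma equalize (L : nat) (HL : (2 <= L)%nat) (Pmax sigma2 : R)
  (HP : 0 < Pmax) (Hs : 0 < sigma2) (g : nat -> nat -> nat -> R)
  (Hg : forall j i l : nat, (j = 1%nat \/ j = 2%nat) -> (i = 1%nat \/ i = 2%nat) ->
        (1 <= l <= L)%nat -> 0 < g j i l) (P0 : nat -> nat -> R) :
  feasible L Pmax P0 ->
  (forall Q : nat -> nat -> R, feasible L Pmax Q ->
       sum_rate L sigma2 g Q <= sum_rate L sigma2 g P0) ->
  exists Pstar : nat -> nat -> R,
    feasible L Pmax Pstar /\
    (forall Q : nat -> nat -> R, feasible L Pmax Q ->
       sum_rate L sigma2 g Q <= sum_rate L sigma2 g Pstar) /\
    (forall i : nat, (i = 1%nat \/ i = 2%nat) ->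
       forall l : nat, (1 <= l <= L)%nat ->
         sinr sigma2 g Pstar i l = sinr sigma2 g Pstar i 1%nat).
Proof.
intros HF Hopt.
assert (HP0 : forall i k, (i = 1%nat \/ i = 2%nat) -> (k < L)%nat -> 0 <= P0 i k)
  by (intros; apply HF; auto).
set (m1 := min_sinr L sigma2 g P0 1%nat).
set (m2 := min_sinr L sigma2 g P0 2%nat).
assert (Hm1 : 0 <= m1) by (apply min_sinr_nonneg; auto).
assert (Hm2 : 0 <= m2) by (apply min_sinr_nonneg; auto).
set (E := fun l => g 1%nat 1%nat l * g 2%nat 2%nat l - m1 * m2 * g 2%nat 1%nat l * g 1%nat 2%nat l).
set (x := fun k => sigma2 * m1 * (g 2%nat 2%nat (S k) + m2 * g 2%nat 1%nat (S k)) / E (S k)).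
set (y := fun k => sigma2 * m2 * (g 1%nat 1%nat (S k) + m1 * g 1%nat 2%nat (S k)) / E (S k)).
assert (Hk : forall k, (k < L)%nat ->
  0 <= x k <= P0 1%nat k /\ 0 <= y k <= P0 2%nat k /\
  x k * g 1%nat 1%nat (S k) / (sigma2 + y k * g 2%nat 1%nat (S k)) = m1 /\
  y k * g 2%nat 2%nat (S k) / (sigma2 + x k * g 1%nat 2%nat (S k)) = m2).
{ intros k Hk.
  assert (g11 : 0 < g 1%nat 1%nat (S k)) by (apply Hg; auto; lia).
  assert (g22 : 0 < g 2%nat 2%nat (S k)) by (apply Hg; auto; lia).
  assert (g21 : 0 < g 2%nat 1%nat (S k)) by (apply Hg; auto; lia).
  assert (g12 : 0 < g 1%nat 2%nat (S k)) by (apply Hg; auto; lia).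
  assert (X0 : 0 <= P0 1%nat k) by auto.
  assert (Y0 : 0 <= P0 2%nat k) by auto.
  assert (S1 : m1 <= sinr sigma2 g P0 1%nat (S k)) by (apply min_le_sinr; lia).
  assert (S2 : m2 <= sinr sigma2 g P0 2%nat (S k)) by (apply min_le_sinr; lia).
  unfold sinr in S1, S2. simpl in S1, S2. rewrite Nat.sub_0_r in S1, S2.
  assert (D1 : 0 < sigma2 + P0 2%nat k * g 2%nat 1%nat (S k)) by nra.
  assert (D2 : 0 < sigma2 + P0 1%nat k * g 1%nat 2%nat (S k)) by nra.
  assert (H1 : m1 * (sigma2 + P0 2%nat k * g 2%nat 1%nat (S k)) <= P0 1%nat k * g 1%nat 1%nat (S k)).
  { apply (Rmult_le_compat_r (sigma2 + P0 2%nat k * g 2%nat 1%nat (S k))) in S1; [|lra].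
    unfold Rdiv in S1. rewrite Rmult_assoc, Rinv_l in S1 by lra. lra. }
  assert (H2 : m2 * (sigma2 + P0 1%nat k * g 1%nat 2%nat (S k)) <= P0 2%nat k * g 2%nat 2%nat (S k)).
  { apply (Rmult_le_compat_r (sigma2 + P0 1%nat k * g 1%nat 2%nat (S k))) in S2; [|lra].
    unfold Rdiv in S2. rewrite Rmult_assoc, Rinv_l in S2 by lra. lra. }
  exact (hop_solve sigma2 _ _ _ _ m1 m2 _ _ Hs g11 g22 g21 g12 Hm1 Hm2 X0 Y0 H1 H2). }
set (Ps := fun i k => if Nat.eqb i 1%nat then x k else y k).
assert (Hsinr : forall i l, (i = 1%nat \/ i = 2%nat) -> (1 <= l <= L)%nat ->
  sinr sigma2 g Ps i l = if Nat.eqb i 1%nat then m1 else m2).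
{ intros i l Hi Hl. destruct l as [|k]; [lia|].
  destruct (Hk k) as [A [B [C D]]]; [lia|].
  unfold sinr. simpl. rewrite Nat.sub_0_r.
  destruct Hi as [->| ->]; simpl; [exact C|exact D]. }
assert (Hmin : forall i, (i = 1%nat \/ i = 2%nat) ->
  min_sinr L sigma2 g Ps i = if Nat.eqb i 1%nat then m1 else m2).
{ intros i Hi. unfold min_sinr. rewrite (Hsinr i 1%nat) by (auto; lia).
  apply fold_min_const. intros z Hz. apply in_map_iff in Hz.
  destruct Hz as [l [<- Hl]]. apply in_seq in Hl. apply Hsinr; auto; lia. }
assert (Hsr : sum_rate L sigma2 g Ps = sum_rate L sigma2 g P0).
{ unfold sum_rate. rewrite (Hmin 1%nat), (Hmin 2%nat) by auto. reflexivity. }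
exists Ps. split; [|split].
- intros i k Hi Hkl. destruct (Hk k Hkl) as [A [B _]].
  destruct Hi as [->| ->]; unfold Ps; simpl.
  + pose proof (HF 1%nat k (or_introl eq_refl) Hkl). lra.
  + pose proof (HF 2%nat k (or_intror eq_refl) Hkl). lra.
- intros Q HQ. rewrite Hsr. auto.
- intros i Hi l Hl. rewrite !Hsinr by (auto; lia). reflexivity.
Qed.

From mathcomp Require all_boot all_order all_algebra.
From mathcomp Require all_classical all_reals all_analysis.
From mathcomp Require Rstruct Rstruct_topology zify.

Module EVT.
Import all_boot all_order all_algebra all_classical all_reals all_analysis Rstruct Rstruct_topology zify.
Import Order.TTheory GRing.Theory Num.Theory.
Import numFieldNormedType.Exports.
Local Open Scope classical_set_scope.
Local Open Scope ring_scope.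

Lemma RminE (a b : R) : Rmin a b = Num.min a b.
Proof.
rewrite /Rmin; case: Rle_dec => H.
- rewrite min_l //; exact/RleP.
- rewrite min_r //; apply/RleP. apply: Rlt_le; exact: Rnot_le_lt.
Qed.

Section S.
Variable T : topologicalType.

Lemma cont_fold (f : nat -> T -> R) (b : T -> R) (s : list nat) :
  continuous b -> (forall l, In l s -> continuous (f l)) ->
  continuous (fun v => fold_right Rmin (b v) (map (fun l => f l v) s)).
Proof.
move=> cb; elim: s => [|a s IH] H /=; first exact: cb.
have -> : (fun v => Rmin (f a v) (fold_right Rmin (b v) (map (fun l => f l v) s)))
  = (f a) \min (fun v => fold_right Rmin (b v) (map (fun l => f l v) s)).
  by apply: funext => v; rewrite RminE.
move=> x; apply: continuous_min; first by apply: H; left.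
by apply: IH => l Hl; apply: H; right.
Qed.
End S.

Lemma coord_abs_cont n (j : 'I_n.+1) :
  continuous (fun v : 'rV[R]_n.+1 => Rabs (v ord0 j)).
Proof.
move=> v.
exact: (@continuous_comp _ _ _ (fun M : 'rV[R]_n.+1 => M ord0 j) Num.norm v
   (@coord_continuous R 1 n.+1 ord0 j v) (@norm_continuous _ R^o _)).
Qed.

Lemma cont_ratio (T : topologicalType) (a b : T -> R) (c1 c2 s : R) :
  continuous a -> continuous b -> Rlt 0 s -> Rle 0 c2 -> (forall v, Rle 0 (b v)) ->
  continuous (fun v => Rdiv (Rmult (a v) c1) (Rplus s (Rmult (b v) c2))).
Proof.
move=> ca cb Hs Hc2 Hb x. rewrite /Rdiv.
apply: continuousM.
  apply: continuousM; [exact: ca | exact: cst_continuous].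
apply: continuousV.
  apply/eqP => H1. have H2 := Hb x. have H3 := Rmult_le_pos _ _ H2 Hc2. have Hpos : Rlt R0 (s + b x * c2)%coqR by lra. rewrite H1 in Hpos. exact: (Rlt_irrefl _ Hpos).
apply: continuousD; first exact: cst_continuous.
apply: continuousM; [exact: cb | exact: cst_continuous].
Qed.

Section Main.
Local Open Scope R_scope.
Lemma exists_opt (L : nat) (HL : (2 <= L)%coq_nat) (Pmax sigma2 : R)
  (HP : 0 < Pmax) (Hs : 0 < sigma2) (g : nat -> nat -> nat -> R)
  (Hg : forall j i l : nat, (j = 1%N \/ j = 2%N) -> (i = 1%N \/ i = 2%N) ->
        (1 <= l /\ l <= L)%coq_nat -> 0 < g j i l) :
  exists P0 : nat -> nat -> R, feasible L Pmax P0 /\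
    (forall Q : nat -> nat -> R, feasible L Pmax Q ->
       sum_rate L sigma2 g Q <= sum_rate L sigma2 g P0).
Proof.
pose n := (L + L)%N.
pose idx i k := if Nat.eqb i 1 then k else (L + k)%N.
pose Phi (v : 'rV[R]_n.+1) i k := Rabs (v ord0 (inord (idx i k))).
pose G v := (1 + min_sinr L sigma2 g (Phi v) 1%N) * (1 + min_sinr L sigma2 g (Phi v) 2%N).
pose A := [set v : 'rV[R]_n.+1 | forall j, `[(0:R)%R, Pmax]%classic (v ord0 j)].
have csinr : forall i l, (i = 1%N \/ i = 2%N) -> (1 <= l /\ l <= L)%coq_nat ->
    continuous (fun v => sinr sigma2 g (Phi v) i l).
  move=> i l Hi Hl; rewrite /sinr.
  apply: (@cont_ratio _ (fun v => Phi v i (l-1)%N) (fun v => Phi v (other i) (l-1)%N)).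
  - exact: coord_abs_cont.
  - exact: coord_abs_cont.
  - exact: Hs.
  - apply: Rlt_le; apply: Hg => //; rewrite /other; lia.
  - move=> v; exact: Rabs_pos.
have cmin : forall i, (i = 1%N \/ i = 2%N) -> continuous (fun v => min_sinr L sigma2 g (Phi v) i).
  move=> i Hi; rewrite /min_sinr.
  apply: cont_fold; first by apply: csinr => //; lia.
  move=> l /in_seq Hl; apply: csinr => //; lia.
have cG : continuous G.
  move=> x; apply: continuousM; apply: continuousD; try exact: cst_continuous.
  - by apply: cmin; left.
  - by apply: cmin; right.
have A0 : A !=set0.
  exists 0%R => j /=; rewrite mxE in_itv /= lexx /=. apply/RleP; apply: Rlt_le; exact: HP.
have Ac : compact A.
  exact: (@rV_compact R n.+1 (fun _ => `[(0:R)%R, Pmax]%classic) (fun _ => @segment_compact R 0%R Pmax)).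
have [c cA cmax] := @compact_EVT_max _ R G A A0 Ac (continuous_subspaceT cG).
have cA' : forall j, Rle 0 (c ord0 j) /\ Rle (c ord0 j) Pmax.
  move=> j; move: cA; rewrite in_setE => /(_ j); rewrite /= in_itv /= => /andP[h1 h2].
  by split; apply/RleP.
have HPl : Rle 0 Pmax by apply: Rlt_le.
have Hg' := Hg.
exists (Phi c); split.
  move=> i k Hi Hk; rewrite /Phi; have [h1 h2] := cA' (inord (idx i k)).
  rewrite Rabs_right; last by apply: Rle_ge.
  by split.
move=> Q HQ.
pose v := \row_(j < n.+1) (if (j < L)%N then Q 1%N j else if (j < n)%N then Q 2%N (j - L)%N else 0%R).
have vA : v \in A.
  rewrite in_setE => j /=; rewrite mxE in_itv /=.
  case: ifP => h.
    have [h1 h2] := HQ 1%N j (or_introl erefl) (elimT ssrnat.ltP h).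
    by apply/andP; split; apply/RleP.
  case: ifP => h'.
    have hk : (j - L < L)%coq_nat by apply/ssrnat.ltP; lia.
    have [h1 h2] := HQ 2%N (j - L)%N (or_intror erefl) hk.
    by apply/andP; split; apply/RleP.
  by rewrite lexx /=; apply/RleP.
have agree : forall i k, (i = 1%N \/ i = 2%N) -> (k < L)%coq_nat -> Phi v i k = Q i k.
  move=> i k Hi Hk; rewrite /Phi mxE inordK; last first.
    rewrite /idx; case: Hi => -> /=; move/ssrnat.ltP: Hk; lia.
  have HQ' := HQ i k Hi Hk.
  case: Hi HQ' => -> /= [h1 h2].
    have -> : (k < L)%N by apply/ssrnat.ltP.
    by rewrite Rabs_right //; apply: Rle_ge.
  have -> : (L + k < L)%N = false by move/ssrnat.ltP: Hk; lia.
  have -> : (L + k < n)%N by move/ssrnat.ltP: Hk; lia.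
  have -> : (L + k - L)%N = k by lia.
  by rewrite Rabs_right //; apply: Rle_ge.
have Gv := cmax v vA. move/RleP: Gv => Gv.
have e1 := min_sinr_ext sigma2 g (Phi v) Q L 1%N HL agree (or_introl erefl).
have e2 := min_sinr_ext sigma2 g (Phi v) Q L 2%N HL agree (or_intror erefl).
have Pc0 : forall i k, (i = 1%N \/ i = 2%N) -> (k < L)%coq_nat -> Rle 0 (Phi c i k).
  by move=> *; apply: Rabs_pos.
have Q0 : forall i k, (i = 1%N \/ i = 2%N) -> (k < L)%coq_nat -> Rle 0 (Q i k).
  by move=> i k Hi Hk; have [] := HQ i k Hi Hk.
apply: sum_rate_mono.
- by apply: min_sinr_nonneg => //; left.
- by apply: min_sinr_nonneg => //; right.
- by apply: min_sinr_nonneg => //; left.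
- by apply: min_sinr_nonneg => //; right.
- by rewrite /G -e1 -e2 in Gv *.
Qed.
End Main.
End EVT.

Theorem lemma1 (L : nat) (HL : (2 <= L)%nat) (Pmax sigma2 : R)
  (HP : 0 < Pmax) (Hs : 0 < sigma2) (g : nat -> nat -> nat -> R)
  (Hg : forall j i l : nat, (j = 1%nat \/ j = 2%nat) -> (i = 1%nat \/ i = 2%nat) ->
        (1 <= l <= L)%nat -> 0 < g j i l) :
  exists Pstar : nat -> nat -> R,
    feasible L Pmax Pstar /\
    (forall Q : nat -> nat -> R, feasible L Pmax Q ->
       sum_rate L sigma2 g Q <= sum_rate L sigma2 g Pstar) /\
    (forall i : nat, (i = 1%nat \/ i = 2%nat) ->
       forall l : nat, (1 <= l <= L)%nat ->
         sinr sigma2 g Pstar i l = sinr sigma2 g Pstar i 1%nat).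
Proof.
destruct (EVT.exists_opt L HL Pmax sigma2 HP Hs g Hg) as [P0 [HF Hopt]].
exact (equalize L HL Pmax sigma2 HP Hs g Hg P0 HF Hopt).
Qed.
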